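(* Let $\mathfrak V$ be an abstract h-strong super operator space. Then for each $n$ there exist an (ungraded) Hilbert space $\mathcal H_n$ and a linear map $\nu:M_n(\mathfrak V)\to\mathcal B(\mathcal H_n)$ with $\nu(x^* )=\nu(x)^\dagger$ (ordinary adjoint) which is strongly contractive, i.e. $\sup_{\Vert\xi\Vert\le1}|\langle\nu(x)\xi,\xi\rangle|\le\Vert x\Vert^s_n$ for all $x\in M_n(\mathfrak V)$, and hermitian isometric, i.e. $\Vert\nu(x)\Vert=\Vert x\Vert^s_n$ for all $x\in M_n(\mathfrak V)$ with $x=x^*$.
   Context: Let $\mathfrak V$ be a complex vector space with an antilinear involution $v\mapsto v^*$; on $M_n(\mathfrak V)$ put $[x_{ij}]^*=[x_{ji}^*]$. A strong matrix norm is a sequence of norms $\Vert\cdot\Vert^s_n$ on $M_n(\mathfrak V)$ satisfying $(\Sigma M1)$: $\Vert x\oplus y\Vert^s_{n+m}=\max\{\Vert x\Vert^s_n,\Vert y\Vert^s_m\}$, and $(\Sigma M2)$: $\Vert\alpha x\overline\alpha\Vert^s_n\le\Vert\alpha\Vert^2\Vert x\Vert^s_r$ for $\alpha\in M_{n,r}(\mathbb C)$, $x\in M_r(\mathfrak V)$. The induced ordinary matrix norm is $\Vert x\Vert_n:=2\left\Vert\begin{pmatrix}0&x\\0&0\end{pmatrix}\right\Vert^s_{2n}$. An abstract h-strong super operator space is such a $\mathfrak V$ (a super operator space for the induced matrix norms) whose strong matrix norm satisfies $(\Sigma M1)$, $(\Sigma M2)$, for which the involution is strongly completely antiisometric ($\Vert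 x^*\Vert^s_n=\Vert x\Vert^s_n$ for all $n$ and $x\in M_n(\mathfrak V)$), and which satisfies $(h\Sigma M* )$: $\Vert x\Vert^s_n=2\left\Vert\begin{pmatrix}0&x\\0&0\end{pmatrix}\right\Vert^s_{2n}$ for every hermitian $x=x^*\in M_n(\mathfrak V)$. *)

(* Defs.v *)
From HB Require Import structures.
From mathcomp Require Import all_boot all_order all_algebra.
From mathcomp Require Import boolp classical_sets reals.
From mathcomp Require Import complex.

Set Implicit Arguments.
Unset Strict Implicit.
Unset Printing Implicit Defensive.

Import Order.TTheory GRing.Theory Num.Theory.
Local Open Scope ring_scope.
Local Open Scope classical_set_scope.

Section SuperOpSpace.
Variable R : realType.
Local Notation C := (R[i]).

Definition cabs (z : C) : R := Normc.normc z.

Definition cvnorm r (xi : 'cV[C]_r) : R :=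
  Num.sqrt (\sum_(i < r) cabs (xi i 0) ^+ 2).

Definition mxopnorm n r (alpha : 'M[C]_(n, r)) : R :=
  sup [set cvnorm (alpha *m xi) | xi in [set xi : 'cV[C]_r | cvnorm xi <= 1]].

Variable V : lmodType C.
Variable star : V -> V.

Definition antilinear_involution :=
  (forall v, star (star v) = v) /\
  (forall (a : C) (v w : V), star (a *: v + w) = conjc a *: star v + star w).

Definition mxstar n (x : 'M[V]_n) : 'M[V]_n := \matrix_(i, j) star (x j i).

Definition mxscale n (a : C) (x : 'M[V]_n) : 'M[V]_n := map_mx ( *:%R a) x.

Definition dsum n m (x : 'M[V]_n) (y : 'M[V]_m) : 'M[V]_(n + m) :=
  block_mx x 0 0 y.

(* alpha x alpha-bar, with alpha-bar the conjugate transpose of alpha *)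
Definition congr_act n r (alpha : 'M[C]_(n, r)) (x : 'M[V]_r) : 'M[V]_n :=
  \matrix_(i, j) \sum_(k < r) \sum_(l < r) (alpha i k * conjc (alpha j l)) *: x k l.

Definition sandwich n r (alpha : 'M[C]_(n, r)) (x : 'M[V]_r) (beta : 'M[C]_(r, n))
  : 'M[V]_n :=
  \matrix_(i, j) \sum_(k < r) \sum_(l < r) (alpha i k * beta l j) *: x k l.

Variable ns : forall n, 'M[V]_n -> R.

Definition is_norm_seq :=
  forall n,
    (forall x : 'M[V]_n, ns x = 0 -> x = 0) /\
    (forall (a : C) (x : 'M[V]_n), ns (mxscale a x) = cabs a * ns x) /\
    (forall x y : 'M[V]_n, ns (x + y) <= ns x + ns y).

Definition SigmaM1 :=
  forall n m (x : 'M[V]_n) (y : 'M[V]_m), ns (dsum x y) = Num.max (ns x) (ns y).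

Definition SigmaM2 :=
  forall n r (alpha : 'M[C]_(n, r)) (x : 'M[V]_r),
    ns (congr_act alpha x) <= mxopnorm alpha ^+ 2 * ns x.

Definition indnorm n (x : 'M[V]_n) : R := 2 * ns (block_mx 0 x 0 0 : 'M[V]_(n + n)).

(* Ruan's axioms for the induced matrix norms (operator space structure) *)
Definition induced_operator_space :=
  (forall n m (x : 'M[V]_n) (y : 'M[V]_m),
      indnorm (dsum x y) = Num.max (indnorm x) (indnorm y)) /\
  (forall n r (alpha : 'M[C]_(n, r)) (x : 'M[V]_r) (beta : 'M[C]_(r, n)),
      indnorm (sandwich alpha x beta) <= mxopnorm alpha * indnorm x * mxopnorm beta).

Definition strongly_completely_antiisometric :=
  forall n (x : 'M[V]_n), ns (mxstar x) = ns x.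

Definition hSigmaMstar :=
  forall n (x : 'M[V]_n), mxstar x = x -> ns x = indnorm x.

Definition abstract_h_strong_super_operator_space :=
  antilinear_involution /\ is_norm_seq /\ induced_operator_space /\
  SigmaM1 /\ SigmaM2 /\ strongly_completely_antiisometric /\ hSigmaMstar.

End SuperOpSpace.

Section Hilbert.
Variable R : realType.
Local Notation C := (R[i]).
Variable H : lmodType C.
Variable ip : H -> H -> C.

Definition hnorm (u : H) : R := Num.sqrt (complex.Re (ip u u)).

Definition is_hilbert :=
  [/\ (forall (a : C) (u v w : H), ip (a *: u + v) w = a * ip u w + ip v w),
      (forall u v : H, ip v u = conjc (ip u v)),
      (forall u : H, u != 0 -> 0 < ip u u) &
      (forall s : nat -> H,
         (forall e : R, 0 < e -> exists N : nat, forall m k : nat,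
              (N <= m)%N -> (N <= k)%N -> hnorm (s m - s k) < e) ->
         exists l : H, forall e : R, 0 < e -> exists N : nat, forall m : nat,
              (N <= m)%N -> hnorm (s m - l) < e)].

Definition bounded_op (T : H -> H) :=
  (forall (a : C) (u v : H), T (a *: u + v) = a *: T u + T v) /\
  (exists M : R, forall u : H, hnorm (T u) <= M * hnorm u).

Definition unit_ball := [set u : H | hnorm u <= 1].

Definition hopnorm (T : H -> H) : R := sup [set hnorm (T u) | u in unit_ball].

Definition numrad (T : H -> H) : R := sup [set cabs (ip (T u) u) | u in unit_ball].

End Hilbert.

(* Main.v *)
Require Import Defs.
From HB Require Import structures.
From mathcomp Require Import all_boot all_order all_algebra.
From mathcomp Require Import boolp classical_sets reals.
From mathcomp Require Import complex.
From mathcomp Require Import ring lra.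
Set Implicit Arguments.
Unset Strict Implicit.
Unset Printing Implicit Defensive.
Import Order.TTheory GRing.Theory Num.Theory.
Local Open Scope ring_scope.
Local Open Scope classical_set_scope.

Section Sums.
Variable R : realType.
Variable S : eqType.
Implicit Types f g : S -> R.

Definition bnd f := exists B : R, forall A : seq S, uniq A -> \sum_(s <- A) f s <= B.
Definition psums f := [set \sum_(s <- A) f s | A in [set A : seq S | uniq A]].
Definition nsum f : R := sup (psums f).

Lemma sum_sub f A B : (forall s, 0 <= f s) -> uniq A -> uniq B ->
  {subset A <= B} -> \sum_(s <- A) f s <= \sum_(s <- B) f s.
Proof.
move=> f0 uA uB sAB; rewrite [X in _ <= X](bigID (mem A)) /=.
have -> : \sum_(s <- B | s \in A) f s = \sum_(s <- A) f s.
  rewrite -big_filter; apply: perm_big; apply: uniq_perm; rewrite ?filter_uniq //.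
  by move=> x; rewrite mem_filter; apply/andP/idP => [[]//|xA]; split => //; apply: sAB.
by rewrite lerDl sumr_ge0.
Qed.

Lemma psums_ne f : psums f !=set0.
Proof. by exists 0; exists [::] => //; rewrite big_nil. Qed.

Lemma nsum_ub f A : bnd f -> uniq A -> \sum_(s <- A) f s <= nsum f.
Proof.
move=> [B hB] uA; apply: sup_upper_bound; last by exists A.
split; first exact: psums_ne.
by exists B => _ [A' uA' <-]; apply: hB.
Qed.

Lemma nsum_le f B : (forall A, uniq A -> \sum_(s <- A) f s <= B) -> nsum f <= B.
Proof. by move=> hB; apply: ge_sup; [exact: psums_ne| move=> _ [A uA <-]; apply: hB]. Qed.

Lemma nsum_ge0 f : bnd f -> 0 <= nsum f.
Proof. by move=> bf; have := nsum_ub bf (isT : uniq [::]); rewrite big_nil. Qed.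

Lemma bnd_le f g : (forall s, f s <= g s) -> bnd g -> bnd f.
Proof.
move=> fg [B hB]; exists B => A uA; apply: le_trans (hB A uA).
by apply: ler_sum => s _; apply: fg.
Qed.

Lemma nsum_mono f g : (forall s, f s <= g s) -> bnd g -> nsum f <= nsum g.
Proof.
move=> fg bg; apply: nsum_le => A uA; apply: le_trans (nsum_ub bg uA).
by apply: ler_sum => s _; apply: fg.
Qed.

Lemma sum_union f g A B : (forall s, 0 <= f s) -> (forall s, 0 <= g s) ->
  uniq A -> uniq B ->
  \sum_(s <- A) f s + \sum_(s <- B) g s <= \sum_(s <- undup (A ++ B)) (f s + g s).
Proof.
move=> f0 g0 uA uB; rewrite big_split /=; apply: lerD; apply: sum_sub => //;
  rewrite ?undup_uniq // => x xA; rewrite mem_undup mem_cat xA ?orbT //.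
Qed.

Lemma bndD f g : bnd f -> bnd g -> bnd (fun s => f s + g s).
Proof.
move=> [B1 h1] [B2 h2]; exists (B1 + B2) => A uA; rewrite big_split /=.
by apply: lerD; [apply: h1|apply: h2].
Qed.

Lemma bndZ f c : 0 <= c -> bnd f -> bnd (fun s => c * f s).
Proof.
move=> c0 [B h]; exists (c * B) => A uA; rewrite -mulr_sumr.
by apply: ler_wpM2l => //; apply: h.
Qed.

Lemma nsumD f g : (forall s, 0 <= f s) -> (forall s, 0 <= g s) -> bnd f -> bnd g ->
  nsum (fun s => f s + g s) = nsum f + nsum g.
Proof.
move=> f0 g0 bf bg; have bfg := bndD bf bg.
apply/eqP; rewrite eq_le; apply/andP; split.
  apply: nsum_le => A uA; rewrite big_split /=.
  by apply: lerD; apply: nsum_ub.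
rewrite -lerBrDr; apply: nsum_le => A uA; rewrite lerBrDr addrC -lerBrDr.
apply: nsum_le => B uB; rewrite lerBrDr addrC.
apply: le_trans (sum_union f0 g0 uA uB) _; apply: nsum_ub => //; exact: undup_uniq.
Qed.

Lemma nsumZ f c : 0 <= c -> (forall s, 0 <= f s) -> bnd f ->
  nsum (fun s => c * f s) = c * nsum f.
Proof.
move=> c0 f0 bf; have bcf := bndZ c0 bf.
apply/eqP; rewrite eq_le; apply/andP; split.
  apply: nsum_le => A uA; rewrite -mulr_sumr.
  by apply: ler_wpM2l => //; apply: nsum_ub.
have [c0e|cn0] := eqVneq c 0; first by rewrite c0e mul0r; apply: nsum_ge0; rewrite -c0e.
have cp : 0 < c by rewrite lt_def cn0.
rewrite mulrC -ler_pdivlMr //; apply: nsum_le => A uA.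
rewrite ler_pdivlMr // mulrC mulr_sumr.
exact: le_trans (nsum_ub bcf uA).
Qed.

Lemma nsum_ext f g : (forall s, f s = g s) -> nsum f = nsum g.
Proof. by move=> fg; rewrite (_ : f = g) //; apply: funext. Qed.

Lemma nsum0 : nsum (fun _ => 0) = 0.
Proof.
apply/eqP; rewrite eq_le nsum_ge0 ?andbT; last by exists 0 => A _; rewrite big1.
by apply: nsum_le => A _; rewrite big1.
Qed.

Definition absb f := bnd (fun s => `|f s|).
Definition rsum f := nsum (fun s => f s + `|f s|) - nsum (fun s => `|f s|).

Lemma bnd_fabs f : absb f -> bnd (fun s => f s + `|f s|).
Proof.
move=> [B h]; exists (2 * B) => A uA; apply: le_trans (_ : _ <= \sum_(s <- A) 2 * `|f s|) _.
  by apply: ler_sum => s _; have := ler_norm (f s); lra.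
by rewrite -mulr_sumr; have := h A uA; lra.
Qed.

Lemma rsum_dec f g h : (forall s, 0 <= g s) -> (forall s, 0 <= h s) -> bnd g -> bnd h ->
  (forall s, f s = g s - h s) -> absb f -> rsum f = nsum g - nsum h.
Proof.
move=> g0 h0 bg bh fgh af; rewrite /rsum.
have p0 : forall s, 0 <= f s + `|f s| by move=> s; have := ler_norm (- f s); rewrite normrN; lra.
have e : nsum (fun s => f s + `|f s|) + nsum h = nsum g + nsum (fun s => `|f s|).
  rewrite -(nsumD p0 h0 (bnd_fabs af) bh) -(nsumD g0 (fun s => normr_ge0 (f s)) bg af).
  apply: nsum_ext => s; rewrite fgh; lra.
lra.
Qed.

Lemma absb_le f g : (forall s, `|f s| <= g s) -> bnd g -> absb f.
Proof. by move=> fg bg; apply: bnd_le bg. Qed.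

Lemma absbD f g : absb f -> absb g -> absb (fun s => f s + g s).
Proof. by move=> af ag; apply: absb_le (bndD af ag) => s; apply: ler_normD. Qed.

Lemma absbZ f c : absb f -> absb (fun s => c * f s).
Proof.
move=> af; apply: absb_le (bndZ (normr_ge0 c) af) => s; by rewrite normrM.
Qed.

Lemma rsum_nn f : (forall s, 0 <= f s) -> bnd f -> rsum f = nsum f.
Proof.
move=> f0 bf; rewrite (@rsum_dec f f (fun _ => 0)) ?nsum0 ?subr0 //.
- by exists 0 => A _; rewrite big1.
- by move=> s; rewrite subr0.
- by apply: absb_le bf => s; rewrite ger0_norm.
Qed.

Lemma rsumD f g : absb f -> absb g -> rsum (fun s => f s + g s) = rsum f + rsum g.
Proof.
move=> af ag.
have p0 : forall f : S -> R, forall s, 0 <= f s + `|f s|.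
  by move=> k s; have := ler_norm (- k s); rewrite normrN; lra.
rewrite (@rsum_dec _ (fun s => (f s + `|f s|) + (g s + `|g s|)) (fun s => `|f s| + `|g s|)).
- rewrite (nsumD (p0 f) (p0 g) (bnd_fabs af) (bnd_fabs ag)).
  rewrite (nsumD (fun s => normr_ge0 (f s)) (fun s => normr_ge0 (g s)) af ag) /rsum; lra.
- by move=> s; apply: addr_ge0.
- by move=> s; apply: addr_ge0.
- by apply: bndD; apply: bnd_fabs.
- exact: bndD.
- by move=> s; lra.
- exact: absbD.
Qed.

Lemma rsumZ f c : absb f -> rsum (fun s => c * f s) = c * rsum f.
Proof.
move=> af.
have p0 : forall s, 0 <= f s + `|f s| by move=> s; have := ler_norm (- f s); rewrite normrN; lra.
have [c0|c0] := lerP 0 c.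
  rewrite (@rsum_dec _ (fun s => c * (f s + `|f s|)) (fun s => c * `|f s|)).
  - by rewrite (nsumZ c0 p0 (bnd_fabs af)) (nsumZ c0 (fun s => normr_ge0 (f s)) af) /rsum; lra.
  - by move=> s; apply: mulr_ge0.
  - by move=> s; apply: mulr_ge0.
  - by apply: bndZ => //; apply: bnd_fabs.
  - exact: bndZ.
  - by move=> s; rewrite mulrDr; lra.
  - exact: absbZ.
have nc : 0 <= - c by lra.
rewrite (@rsum_dec _ (fun s => - c * `|f s|) (fun s => - c * (f s + `|f s|))).
- by rewrite (nsumZ nc p0 (bnd_fabs af)) (nsumZ nc (fun s => normr_ge0 (f s)) af) /rsum; lra.
- by move=> s; apply: mulr_ge0.
- by move=> s; apply: mulr_ge0.
- exact: bndZ.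
- by apply: bndZ => //; apply: bnd_fabs.
- by move=> s; rewrite mulrDr; lra.
- exact: absbZ.
Qed.

Lemma rsum_ext f g : (forall s, f s = g s) -> rsum f = rsum g.
Proof. by move=> fg; rewrite (_ : f = g) //; apply: funext. Qed.

Lemma rsum_le f g : absb f -> absb g -> (forall s, f s <= g s) -> rsum f <= rsum g.
Proof.
move=> af ag fg.
have ad : absb (fun s => g s + (-1) * f s) by apply: absbD => //; apply: absbZ.
have : 0 <= rsum (fun s => g s + (-1) * f s).
  have bd : bnd (fun s => g s + (-1) * f s) by apply: bnd_le ad => s; apply: ler_norm.
  have f0 : forall s, 0 <= g s + (-1) * f s by move=> s; have := fg s; lra.
  by rewrite (rsum_nn f0 bd); exact: nsum_ge0 bd.
by rewrite (rsumD ag (absbZ (-1) af)) (rsumZ (-1) af); lra.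
Qed.

End Sums.
Notation cRe := complex.Re.
Notation cIm := complex.Im.
Section Cx. Variable R : realType.
Lemma cReM (z w : R[i]) : cRe (z * w) = cRe z * cRe w - cIm z * cIm w.
Proof. by case: z => a b; case: w => c d. Qed.
Lemma cImM (z w : R[i]) : cIm (z * w) = cRe z * cIm w + cIm z * cRe w.
Proof. by case: z => a b; case: w => c d. Qed.
Lemma cReD (z w : R[i]) : cRe (z + w) = cRe z + cRe w.
Proof. by case: z => a b; case: w => c d. Qed.
Lemma cImD (z w : R[i]) : cIm (z + w) = cIm z + cIm w.
Proof. by case: z => a b; case: w => c d. Qed.
Lemma cReN (z : R[i]) : cRe (- z) = - cRe z.
Proof. by case: z => a b. Qed.
Lemma cReJ (z : R[i]) : cRe (z ^*)%C = cRe z.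
Proof. by case: z => a b. Qed.
Lemma cImJ (z : R[i]) : cIm (z ^*)%C = - cIm z.
Proof. by case: z => a b. Qed.
Lemma cRe0 : cRe (0 : R[i]) = 0. Proof. by []. Qed.
Lemma cReRC (r : R) : cRe (r%:C)%C = r. Proof. by []. Qed.
Lemma cnorm2 (z : R[i]) : Normc.normc z ^+ 2 = cRe z ^+ 2 + cIm z ^+ 2.
Proof. by case: z => a b /=; rewrite sqr_sqrtr // addr_ge0 // sqr_ge0. Qed.
Lemma ceq (z w : R[i]) : cRe z = cRe w -> cIm z = cIm w -> z = w.
Proof. by case: z => a b; case: w => c d /= -> ->. Qed.
Lemma cltE (z : R[i]) : (0 < z) = (cIm z == 0) && (0 < cRe z).
Proof. by rewrite ltcE eq_sym. Qed.
End Cx.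

Section L2.
Variable R : realType.
Variable S : eqType.
Local Notation C := (R[i]).

Definition n2 (z : C) : R := cRe z ^+ 2 + cIm z ^+ 2.

Lemma n2_ge0 z : 0 <= n2 z.
Proof. by rewrite /n2 addr_ge0 // sqr_ge0. Qed.

Lemma n2D z w : n2 (z + w) <= 2 * n2 z + 2 * n2 w.
Proof.
rewrite /n2 cReD cImD; have h1 := sqr_ge0 (cRe z - cRe w); have h2 := sqr_ge0 (cIm z - cIm w); nra.
Qed.

Lemma n2M z w : n2 (z * w) = n2 z * n2 w.
Proof. rewrite /n2 cReM cImM; ring. Qed.

Lemma n2N z : n2 (- z) = n2 z.
Proof. by rewrite /n2 cReN; case: z => a b /=; rewrite !sqrrN. Qed.

Lemma n2_eq0 z : n2 z = 0 -> z = 0.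
Proof.
rewrite /n2 => h; have h1 : cRe z ^+ 2 = 0 by have := sqr_ge0 (cRe z); have := sqr_ge0 (cIm z); lra.
have h2 : cIm z ^+ 2 = 0 by have := sqr_ge0 (cRe z); have := sqr_ge0 (cIm z); lra.
by apply: ceq => /=; apply/eqP; rewrite -sqrf_eq0 ?h1 ?h2.
Qed.

Definition l2p (u : S -> C) := bnd (fun s => n2 (u s)).

Lemma l2p0 : l2p (fun _ => 0).
Proof. by exists 0 => A _; rewrite big1 // => s _; rewrite /n2 /= expr0n /= addr0. Qed.

Lemma l2pD u v : l2p u -> l2p v -> l2p (fun s => u s + v s).
Proof.
move=> hu hv; apply: bnd_le (bndD (bndZ (ler0n R 2) hu) (bndZ (ler0n R 2) hv)).
by move=> s; apply: n2D.
Qed.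

Lemma l2pZ (c : C) u : l2p u -> l2p (fun s => c * u s).
Proof.
move=> hu; apply: bnd_le (bndZ (n2_ge0 c) hu) => s; by rewrite n2M.
Qed.

Lemma l2pN u : l2p u -> l2p (fun s => - u s).
Proof. by move=> hu; apply: bnd_le hu => s; rewrite n2N. Qed.

Record l2 := L2 { l2f :> S -> C; l2P : l2p l2f }.

Lemma l2_ext (u v : l2) : (forall s, u s = v s) -> u = v.
Proof.
case: u => f pf; case: v => g pg /= e.
have efg : f = g by apply: funext.
subst g; congr L2; apply: Prop_irrelevance.
Qed.

Definition l2zero := L2 l2p0.
Definition l2add (u v : l2) := L2 (l2pD (l2P u) (l2P v)).
Definition l2opp (u : l2) := L2 (l2pN (l2P u)).
Definition l2scale (c : C) (u : l2) := L2 (l2pZ c (l2P u)).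

Lemma l2addA : associative l2add.
Proof. by move=> u v w; apply: l2_ext => s /=; rewrite addrA. Qed.
Lemma l2addC : commutative l2add.
Proof. by move=> u v; apply: l2_ext => s /=; rewrite addrC. Qed.
Lemma l2add0 : left_id l2zero l2add.
Proof. by move=> u; apply: l2_ext => s /=; rewrite add0r. Qed.
Lemma l2addN : left_inverse l2zero l2opp l2add.
Proof. by move=> u; apply: l2_ext => s /=; rewrite addNr. Qed.
Lemma l2scaleA a b v : l2scale a (l2scale b v) = l2scale (a * b) v.
Proof. by apply: l2_ext => s /=; rewrite mulrA. Qed.
Lemma l2scale1 : left_id 1 l2scale.
Proof. by move=> u; apply: l2_ext => s /=; rewrite mul1r. Qed.
Lemma l2scaleDr : right_distributive l2scale l2add.
Proof. by move=> a u v; apply: l2_ext => s /=; rewrite mulrDr. Qed.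
Lemma l2scaleDl v : {morph l2scale^~ v: a b / a + b >-> l2add a b}.
Proof. by move=> a b; apply: l2_ext => s /=; rewrite mulrDl. Qed.

End L2.

HB.instance Definition _ (R : realType) (S : eqType) := gen_eqMixin (l2 R S).
HB.instance Definition _ (R : realType) (S : eqType) := gen_choiceMixin (l2 R S).
HB.instance Definition _ (R : realType) (S : eqType) :=
  GRing.isZmodule.Build (l2 R S) (@l2addA R S) (@l2addC R S) (@l2add0 R S) (@l2addN R S).
HB.instance Definition _ (R : realType) (S : eqType) :=
  GRing.Zmodule_isLmodule.Build (R[i]) (l2 R S) (@l2scaleA R S) (@l2scale1 R S)
    (@l2scaleDr R S) (@l2scaleDl R S).

Section L2b.
Variable R : realType.
Variable S : eqType.
Local Notation C := (R[i]).
Lemma l2E_add (u v : l2 R S) s : (u + v) s = u s + v s. Proof. by []. Qed.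
Lemma l2E_scale (c : C) (u : l2 R S) s : (c *: u) s = c * u s. Proof. by []. Qed.
Lemma l2E_opp (u : l2 R S) s : (- u) s = - u s. Proof. by []. Qed.
Lemma l2E_0 s : (0 : l2 R S) s = 0. Proof. by []. Qed.
End L2b.

Section RealAux.
Variable R : realType.
Lemma sqr_lt_lt (x e : R) : 0 <= x -> 0 < e -> x ^+ 2 < e ^+ 2 -> x < e.
Proof. by rewrite !expr2 => x0 e0 h; nra. Qed.

Lemma lt_sqr_lt (x e : R) : 0 <= x -> x < e -> x ^+ 2 < e ^+ 2.
Proof. by rewrite !expr2 => x0 h; nra. Qed.

Lemma sqr_le_le (x e : R) : 0 <= x -> 0 <= e -> x ^+ 2 <= e ^+ 2 -> x <= e.
Proof. by rewrite !expr2 => x0 e0 h; nra. Qed.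

End RealAux.


Section HahnBanach.
Variable R : realType.
Variable X : zmodType.
Variable sc : R -> X -> X.
Hypothesis scD : forall r x y, sc r (x + y) = sc r x + sc r y.
Hypothesis scM : forall r s x, sc r (sc s x) = sc (r * s) x.
Hypothesis sc1 : forall x, sc 1 x = x.
Hypothesis scDr : forall r s x, sc (r + s) x = sc r x + sc s x.
Variable p : X -> R.
Hypothesis pD : forall x y, p (x + y) <= p x + p y.
Hypothesis pZ : forall r x, p (sc r x) = `|r| * p x.

Lemma sc0 x : sc 0 x = 0.
Proof. by apply: (addrI (sc 0 x)); rewrite addr0 -scDr addr0. Qed.

Lemma scx0 r : sc r 0 = 0.
Proof. by apply: (addrI (sc r 0)); rewrite addr0 -scD addr0. Qed.

Lemma scN r x : sc (- r) x = - sc r x.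
Proof.
have := scDr r (- r) x; rewrite addrN sc0 => e.
by apply/eqP; rewrite -addr_eq0 addrC -e.
Qed.

Lemma scNx x : sc (-1) x = - x.
Proof. by rewrite scN sc1. Qed.

Definition sublin (q : X -> R) :=
  (forall x y, q (x + y) <= q x + q y) /\ (forall r x, 0 < r -> q (sc r x) = r * q x).

Section Sub.
Variable q : X -> R.
Hypothesis sq : sublin q.

Lemma q0 : q 0 = 0.
Proof.
have := (proj2 sq) 2 0 (ltr0Sn R 1); rewrite scx0 => e; lra.
Qed.

Lemma qhom0 t x : 0 <= t -> q (sc t x) = t * q x.
Proof.
rewrite le_eqVlt => /orP[/eqP <-|tp]; last exact: (proj2 sq).
by rewrite sc0 q0 mul0r.
Qed.

Lemma qlow x : - q (- x) <= q x.
Proof. by have := (proj1 sq) x (- x); rewrite addrN q0; lra. Qed.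

End Sub.

Lemma hom_le_eq (f : X -> R) :
  (forall r x, 0 < r -> f (sc r x) <= r * f x) -> forall r x, 0 < r -> f (sc r x) = r * f x.
Proof.
move=> h r x rp; apply/eqP; rewrite eq_le h //=.
have ri : 0 < r^-1 by rewrite invr_gt0.
have := h r^-1 (sc r x) ri; rewrite scM mulVf ?gt_eqF // sc1 => e.
by rewrite -ler_pdivlMl.
Qed.

Definition Dset (q : X -> R) x y := [set t * q x - q (y + sc t x) | t in [set t : R | 0 <= t]].
Definition Dq (q : X -> R) x y : R := - sup (Dset q x y).

Section DqSec.
Variable q : X -> R.
Hypothesis sq : sublin q.
Variable x : X.

Lemma Dset_ub y : ubound (Dset q x y) (q (- y)).
Proof.
move=> _ [t t0 <-]; have := (proj1 sq) (y + sc t x) (- y).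
by rewrite addrC addKr qhom0 //; lra.
Qed.

Lemma Dset_has y : has_sup (Dset q x y).
Proof.
split; last by exists (q (- y)); apply: Dset_ub.
by exists (0 * q x - q (y + sc 0 x)); exists 0 => //=.
Qed.

Lemma Dq_le y t : 0 <= t -> Dq q x y <= q (y + sc t x) - t * q x.
Proof.
move=> t0; rewrite /Dq; have := sup_upper_bound (Dset_has y) (ex_intro2 _ _ t t0 erefl).
lra.
Qed.

Lemma Dq_glb y a : (forall t, 0 <= t -> a <= q (y + sc t x) - t * q x) -> a <= Dq q x y.
Proof.
move=> h; rewrite /Dq lerNr; apply: ge_sup; first by exists (0 * q x - q (y + sc 0 x)); exists 0 => //=.
by move=> _ [t t0 <-]; have := h t t0; lra.
Qed.

Lemma Dq_approx y e : 0 < e -> exists2 t, 0 <= t & q (y + sc t x) - t * q x < Dq q x y + e.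
Proof.
move=> e0; have [_ [t t0 <-]] := sup_adherent e0 (Dset_has y).
by move=> h; exists t => //; rewrite /Dq; lra.
Qed.

Lemma Dq_leq y : Dq q x y <= q y.
Proof. by have := Dq_le y (lexx 0); rewrite sc0 addr0 mul0r subr0. Qed.

Lemma Dq_1 y : Dq q x y <= q (y + x) - q x.
Proof. by have := Dq_le y ler01; rewrite sc1 mul1r. Qed.

Lemma Dq_sublin : sublin (Dq q x).
Proof.
split.
  move=> y1 y2; apply/ler_addgt0Pr => e e0.
  have e2 : 0 < e / 2 by rewrite divr_gt0.
  have [t1 t10 h1] := Dq_approx y1 e2; have [t2 t20 h2] := Dq_approx y2 e2.
  apply: le_trans (Dq_le (y1 + y2) (addr_ge0 t10 t20)) _.
  have := (proj1 sq) (y1 + sc t1 x) (y2 + sc t2 x).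
  rewrite scDr (_ : y1 + sc t1 x + (y2 + sc t2 x) = y1 + y2 + (sc t1 x + sc t2 x)); last first.
    by rewrite addrACA.
  move=> h; rewrite mulrDl; lra.
apply: hom_le_eq => r y rp; rewrite -ler_pdivrMl //; apply: Dq_glb => t t0.
rewrite ler_pdivrMl //; apply: le_trans (Dq_le _ (mulr_ge0 (ltW rp) t0)) _.
by rewrite -scM -scD (proj2 sq) // mulrBr mulrA.
Qed.

End DqSec.

Variable h : X.

Definition good (q : X -> R) := sublin q /\ (forall y, q y <= p y) /\ q (- h) <= - p h.

Lemma p_sublin : sublin p.
Proof. by split => // r x rp; rewrite pZ gtr0_norm. Qed.

Lemma good0 : good (Dq p h).
Proof.
split; first exact: (Dq_sublin p_sublin h).
split; first by move=> y; exact: (Dq_leq p_sublin h y).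
by have := Dq_1 p_sublin h (- h); rewrite addNr (q0 p_sublin) sub0r.
Qed.

Definition GT := {q : X -> R | good q}.
Definition Rel (a b : GT) : bool := `[< forall y, proj1_sig b y <= proj1_sig a y >].

Lemma chain_lb (A : set GT) : total_on A Rel -> exists t, forall s, A s -> Rel s t.
Proof.
move=> tot; have [[a0 Aa0]|A0] := pselect (A !=set0); last first.
  exists (exist _ _ good0) => s As; exfalso; apply: A0; by exists s.
pose E y := [set - proj1_sig a y | a in A].
have Eub y : ubound (E y) (p (- y)).
  move=> _ [a Aa <-]; case: a Aa => q [sq [qp _]] _ /=.
  by have := qlow sq y; have := qp (- y); lra.
have Ehas y : has_sup (E y) by split; [exists (- proj1_sig a0 y); exists a0 | exists (p (- y))].
pose m y := - sup (E y).
have m_le y a : A a -> m y <= proj1_sig a y.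
  by move=> Aa; have := sup_upper_bound (Ehas y) (ex_intro2 _ _ a Aa erefl); rewrite /m; lra.
have m_glb y b : (forall a, A a -> b <= proj1_sig a y) -> b <= m y.
  move=> hb; rewrite /m lerNr; apply: ge_sup; first by exists (- proj1_sig a0 y); exists a0.
  by move=> _ [a Aa <-]; have := hb a Aa; lra.
have m_app y e : 0 < e -> exists2 a, A a & proj1_sig a y < m y + e.
  move=> e0; have [_ [a Aa <-]] := sup_adherent e0 (Ehas y).
  by move=> hh; exists a => //; rewrite /m; lra.
have gm : good m.
  split; [split|split].
  - move=> x y; apply/ler_addgt0Pr => e e0.
    have e2 : 0 < e / 2 by rewrite divr_gt0.
    have [a1 Aa1 h1] := m_app x _ e2; have [a2 Aa2 h2] := m_app y _ e2.
    have key : forall b, A b -> proj1_sig b x < m x + e / 2 -> proj1_sig b y < m y + e / 2 ->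
        m (x + y) <= m x + m y + e.
      move=> b Ab hx hy; apply: le_trans (m_le _ _ Ab) _.
      case: b Ab hx hy => q [[sq1 sq2] _] /= _ hx hy.
      by have := sq1 x y; lra.
    have [/asboolP r12|/asboolP r21] := tot _ _ Aa1 Aa2.
    + by apply: (key a2) => //; have := r12 x; lra.
    + by apply: (key a1) => //; have := r21 y; lra.
  - apply: hom_le_eq => r y rp; rewrite -ler_pdivrMl //; apply: m_glb => a Aa.
    rewrite ler_pdivrMl //; apply: le_trans (m_le _ _ Aa) _.
    by case: a Aa => q [[_ sq2] _] /= _; rewrite sq2.
  - by move=> y; apply: le_trans (m_le y a0 Aa0) _; have [_ [qp _]] := proj2_sig a0; apply: qp.
  - by apply: le_trans (m_le (- h) a0 Aa0) _; have [_ [_ qh]] := proj2_sig a0; apply: qh.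
exists (exist _ _ gm) => s As; apply/asboolP => y /=; exact: m_le.
Qed.

Theorem hahn_banach : exists g : X -> R,
  [/\ (forall x y, g (x + y) = g x + g y), (forall r x, g (sc r x) = r * g x),
      (forall x, g x <= p x) & g h = p h].
Proof.
have Rxx : forall t, Rel t t by move=> t; apply/asboolP => y; exact: lexx.
have Rtr : forall r s t, Rel r s -> Rel s t -> Rel r t.
  move=> r s t /asboolP h1 /asboolP h2; apply/asboolP => y; exact: le_trans (h2 y) (h1 y).
have Ranti : forall s t, Rel s t -> Rel t s -> s = t.
  move=> [s ps] [t pt] /asboolP /= h1 /asboolP /= h2; apply: eq_exist; apply: funext => y.
  by apply/eqP; rewrite eq_le h1 h2.
have [[q gq] qmax] := Zorn Rxx Rtr Ranti chain_lb.
have [sq [qp qh]] := gq.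
have super : forall x y, q x + q y <= q (x + y).
  move=> x y.
  have gD : good (Dq q x).
    split; first exact: Dq_sublin.
    split; first by move=> z; apply: le_trans (Dq_leq sq x z) (qp z).
    exact: le_trans (Dq_leq sq x (- h)) qh.
  have e := qmax (exist _ _ gD) (asboolT (fun z => Dq_leq sq x z)).
  have e' : Dq q x = q by have := congr1 (@proj1_sig _ _) e.
  by have := Dq_1 sq x y; rewrite e' [y + x]addrC; lra.
have qadd : forall x y, q (x + y) = q x + q y.
  by move=> x y; apply/eqP; rewrite eq_le (proj1 sq) super.
have qN : forall x, q (- x) = - q x.
  by move=> x; have := qadd x (- x); rewrite addrN (q0 sq); lra.
exists q; split => //.
- move=> r x; have [rp|] := ltrP 0 r; first exact: (proj2 sq).
  rewrite le_eqVlt => /orP[/eqP ->|rn]; first by rewrite sc0 (q0 sq) mul0r.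
  rewrite -(opprK r) scN qN (proj2 sq) ?oppr_gt0 //; lra.
- by apply/eqP; rewrite eq_le qp /=; have := qN h; lra.
Qed.

End HahnBanach.


Section IP.
Variable R : realType.
Variable S : eqType.
Local Notation C := (R[i]).
Local Notation H := (l2 R S).

Definition reip (u v : S -> C) s := cRe (u s * (v s)^*%C).
Definition imip (u v : S -> C) s := cIm (u s * (v s)^*%C).
Definition l2ip (u v : H) : C := (rsum (reip u v) +i* rsum (imip u v))%C.

Lemma bnd_half (u v : H) : bnd (fun s => 2^-1 * (n2 (u s) + n2 (v s))).
Proof. by apply: bndZ; [rewrite invr_ge0 ler0n | apply: bndD; apply: l2P]. Qed.

Lemma absb_reip (u v : H) : absb (reip u v).
Proof.
apply: absb_le (bnd_half u v) => s; rewrite /reip cReM cReJ cImJ /n2 ler_norml.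
set a := cRe (u s); set b := cIm (u s); set c := cRe (v s); set d := cIm (v s).
have h1 := sqr_ge0 (a - c); have h2 := sqr_ge0 (b - d).
have h3 := sqr_ge0 (a + c); have h4 := sqr_ge0 (b + d).
apply/andP; split; nra.
Qed.

Lemma absb_imip (u v : H) : absb (imip u v).
Proof.
apply: absb_le (bnd_half u v) => s; rewrite /imip cImM cReJ cImJ /n2 ler_norml.
set a := cRe (u s); set b := cIm (u s); set c := cRe (v s); set d := cIm (v s).
have h1 := sqr_ge0 (a - d); have h2 := sqr_ge0 (b - c).
have h3 := sqr_ge0 (a + d); have h4 := sqr_ge0 (b + c).
apply/andP; split; nra.
Qed.

Lemma rsum_lin (a b : R) (f g k : S -> R) : absb f -> absb g -> absb k ->
  rsum (fun s => a * f s + b * g s + k s) = a * rsum f + b * rsum g + rsum k.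
Proof.
move=> af ag ak.
rewrite (rsumD (absbD (absbZ a af) (absbZ b ag)) ak) (rsumD (absbZ a af) (absbZ b ag)).
by rewrite !rsumZ.
Qed.

Lemma l2ip_lin (a : C) (u v w : H) : l2ip (a *: u + v) w = a * l2ip u w + l2ip v w.
Proof.
apply: ceq.
  rewrite /= (@rsum_ext _ _ _ (fun s => cRe a * reip u w s + (- cIm a) * imip u w s + reip v w s)).
    rewrite rsum_lin; try apply: absb_reip; try apply: absb_imip.
    rewrite (cReD (a * l2ip u w)) (cReM a) /=; ring.
  move=> s; rewrite /reip /imip; move: (u s) (v s) (w s) a => [x1 y1] [x2 y2] [x3 y3] [x4 y4] /=; ring.
rewrite /= (@rsum_ext _ _ _ (fun s => cRe a * imip u w s + cIm a * reip u w s + imip v w s)).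
  rewrite rsum_lin; try apply: absb_reip; try apply: absb_imip.
  rewrite (cImD (a * l2ip u w)) (cImM a) /=; ring.
move=> s; rewrite /reip /imip; move: (u s) (v s) (w s) a => [x1 y1] [x2 y2] [x3 y3] [x4 y4] /=; ring.
Qed.

Lemma reip_sym (u v : H) s : reip v u s = reip u v s.
Proof. by rewrite /reip; move: (u s) (v s) => [x1 y1] [x2 y2] /=; ring. Qed.

Lemma imip_sym (u v : H) s : imip v u s = (-1) * imip u v s.
Proof. by rewrite /imip; move: (u s) (v s) => [x1 y1] [x2 y2] /=; ring. Qed.

Lemma l2ip_sym (u v : H) : l2ip v u = (l2ip u v)^*%C.
Proof.
apply: ceq; rewrite /= ?cReJ ?cImJ /=.
  by apply: rsum_ext => s; apply: reip_sym.
by rewrite (rsum_ext (imip_sym u v)) (rsumZ (-1) (absb_imip u v)); lra.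
Qed.

Lemma reip_self (u : H) s : reip u u s = n2 (u s).
Proof. by rewrite /reip /n2; move: (u s) => [x1 y1] /=; ring. Qed.

Lemma imip_self (u : H) s : imip u u s = 0.
Proof. by rewrite /imip; move: (u s) => [x1 y1] /=; ring. Qed.

Lemma bnd0 : bnd (fun _ : S => 0 : R).
Proof. by exists 0 => A _; rewrite big1. Qed.

Lemma rsum0 : rsum (fun _ : S => 0 : R) = 0.
Proof. by rewrite rsum_nn ?nsum0 //; exact: bnd0. Qed.

Lemma Re_l2ip_self (u : H) : cRe (l2ip u u) = nsum (fun s => n2 (u s)).
Proof. by rewrite /= (rsum_ext (reip_self u)) (rsum_nn (fun s => n2_ge0 (u s)) (l2P u)). Qed.

Lemma Im_l2ip_self (u : H) : cIm (l2ip u u) = 0.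
Proof. by rewrite /= (rsum_ext (imip_self u)) rsum0. Qed.

Lemma hnormE (u : H) : hnorm l2ip u = Num.sqrt (nsum (fun s => n2 (u s))).
Proof. by rewrite /hnorm Re_l2ip_self. Qed.

Lemma l2ip_pos (u : H) : u != 0 -> 0 < l2ip u u.
Proof.
move=> u0; rewrite cltE Im_l2ip_self eqxx andTb Re_l2ip_self.
have [s us] : exists s, u s != 0.
  apply/not_existsP => hn; move/eqP: u0; apply; apply: l2_ext => s.
  by rewrite l2E_0; apply/eqP; apply/negPn/negP => h; apply: (hn s).
have hp : 0 < n2 (u s).
  rewrite lt_def n2_ge0 andbT; apply/eqP => h; move/eqP: us; apply; exact: n2_eq0.
apply: lt_le_trans hp _.
have := @nsum_ub _ _ (fun s => n2 (u s)) [:: s] (l2P u) isT.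
by rewrite big_seq1.
Qed.

End IP.


Lemma real_cauchy (R : realType) (a : nat -> R) :
  (forall e : R, 0 < e -> exists N, forall m k, (N <= m)%N -> (N <= k)%N -> `|a m - a k| < e) ->
  exists L, forall e : R, 0 < e -> exists N, forall m, (N <= m)%N -> `|a m - L| < e.
Proof.
move=> hc.
pose E := [set x : R | exists N, forall m, (N <= m)%N -> x <= a m].
have [N1 h1] := hc 1 ltr01.
have EN : E (a N1 - 1).
  exists N1 => m hm; have := h1 m N1 hm (leqnn _); rewrite ltr_norml => /andP[u v]; lra.
have Eub : ubound E (a N1 + 1).
  move=> x [N hN]; have := hN (maxn N N1) (leq_maxl _ _).
  have := h1 (maxn N N1) N1 (leq_maxr _ _) (leqnn _); rewrite ltr_norml => /andP[u v]; lra.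
have Ehas : has_sup E by split; [exists (a N1 - 1) | exists (a N1 + 1)].
exists (sup E) => e e0.
have e2 : 0 < e / 2 by rewrite divr_gt0.
have [N hN] := hc _ e2.
have lo : a N - e / 2 <= sup E.
  apply: sup_upper_bound => //; exists N => m hm.
  have := hN m N hm (leqnn _); rewrite ltr_norml => /andP[u v]; lra.
have hi : sup E <= a N + e / 2.
  apply: ge_sup; first by exists (a N1 - 1).
  move=> x [Nx hx]; have := hx (maxn Nx N) (leq_maxl _ _).
  have := hN (maxn Nx N) N (leq_maxr _ _) (leqnn _); rewrite ltr_norml => /andP[u v]; lra.
exists N => m hm; have := hN m N hm (leqnn _); rewrite !ltr_norml => /andP[u v].
apply/andP; split; lra.
Qed.

Lemma fin_uniform (S : eqType) (P : S -> nat -> Prop) :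
  (forall s, exists N, forall m, (N <= m)%N -> P s m) ->
  forall A : seq S, exists K, forall m, (K <= m)%N -> forall s, s \in A -> P s m.
Proof.
move=> hP; elim=> [|a A [K hK]]; first by exists 0%N.
have [Na hNa] := hP a; exists (maxn Na K) => m hm s.
rewrite in_cons => /orP[/eqP ->|sA].
  by apply: hNa; apply: leq_trans hm; apply: leq_maxl.
by apply: hK => //; apply: leq_trans hm; apply: leq_maxr.
Qed.

Section Complete.
Variable R : realType.
Variable S : eqType.
Local Notation C := (R[i]).
Local Notation H := (l2 R S).

Lemma hnorm2 (u : H) : hnorm (@l2ip R S) u ^+ 2 = nsum (fun s => n2 (u s)).
Proof. by rewrite hnormE sqr_sqrtr // nsum_ge0 //; exact: l2P. Qed.

Lemma hnorm_ge0 (u : H) : 0 <= hnorm (@l2ip R S) u.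
Proof. by rewrite /hnorm sqrtr_ge0. Qed.

Lemma n2_le_hnorm (u : H) s : n2 (u s) <= hnorm (@l2ip R S) u ^+ 2.
Proof.
rewrite hnorm2; have := @nsum_ub _ _ (fun s => n2 (u s)) [:: s] (l2P u) isT.
by rewrite big_seq1.
Qed.

Lemma Re_le_hnorm (u : H) s : `|cRe (u s)| <= hnorm (@l2ip R S) u.
Proof.
apply: sqr_le_le; rewrite ?normr_ge0 ?hnorm_ge0 //.
apply: le_trans (n2_le_hnorm u s); rewrite real_normK ?num_real // /n2.
by rewrite lerDl sqr_ge0.
Qed.

Lemma Im_le_hnorm (u : H) s : `|cIm (u s)| <= hnorm (@l2ip R S) u.
Proof.
apply: sqr_le_le; rewrite ?normr_ge0 ?hnorm_ge0 //.
apply: le_trans (n2_le_hnorm u s); rewrite real_normK ?num_real // /n2.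
by rewrite lerDr sqr_ge0.
Qed.

Lemma l2_complete : forall U : nat -> H,
  (forall e : R, 0 < e -> exists N : nat, forall m k : nat,
      (N <= m)%N -> (N <= k)%N -> hnorm (@l2ip R S) (U m - U k) < e) ->
  exists l : H, forall e : R, 0 < e -> exists N : nat, forall m : nat,
      (N <= m)%N -> hnorm (@l2ip R S) (U m - l) < e.
Proof.
move=> U hc.
have cRe_sub (z w : C) : cRe (z - w) = cRe z - cRe w by case: z; case: w.
have cIm_sub (z w : C) : cIm (z - w) = cIm z - cIm w by case: z; case: w.
have hr : forall s, exists L, forall e : R, 0 < e -> exists N, forall m, (N <= m)%N ->
    `|cRe (U m s) - L| < e.
  move=> s; apply: real_cauchy => e e0; have [N hN] := hc e e0; exists N => m k hm hk.
  by apply: le_lt_trans (hN m k hm hk); rewrite -cRe_sub; apply: (Re_le_hnorm (U m - U k) s).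
have hi : forall s, exists L, forall e : R, 0 < e -> exists N, forall m, (N <= m)%N ->
    `|cIm (U m s) - L| < e.
  move=> s; apply: real_cauchy => e e0; have [N hN] := hc e e0; exists N => m k hm hk.
  by apply: le_lt_trans (hN m k hm hk); rewrite -cIm_sub; apply: (Im_le_hnorm (U m - U k) s).
have [Lr hLr] := choice hr; have [Li hLi] := choice hi.
pose l s := (Lr s +i* Li s)%C.
have pconv : forall s (eta : R), 0 < eta -> exists N, forall m, (N <= m)%N -> n2 (U m s - l s) < eta.
  move=> s eta eta0.
  pose d := Num.min 1 (eta / 4).
  have d0 : 0 < d by rewrite lt_min ltr01 divr_gt0.
  have d1 : d <= 1 by rewrite ge_min lexx.
  have d2 : d <= eta / 4 by rewrite ge_min lexx orbT.
  have [N1 h1] := hLr s d d0; have [N2 h2] := hLi s d d0.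
  exists (maxn N1 N2) => m hm.
  have := h1 m (leq_trans (leq_maxl _ _) hm); have := h2 m (leq_trans (leq_maxr _ _) hm).
  rewrite /n2 cRe_sub cIm_sub /= !ltr_norml => /andP[u1 u2] /andP[v1 v2].
  set x := cRe (U m s) - Lr s in v1 v2 *; set y := cIm (U m s) - Li s in u1 u2 *.
  have hx : x ^+ 2 < d by rewrite expr2; nra.
  have hy : y ^+ 2 < d by rewrite expr2; nra.
  lra.
have key : forall d : R, 0 < d -> exists N, forall m, (N <= m)%N -> forall A : seq S, uniq A ->
    \sum_(s <- A) n2 (U m s - l s) <= 4 * d ^+ 2.
  move=> d d0; have [N hN] := hc d d0; exists N => m hm A uA.
  pose eta := d ^+ 2 / (size A).+1%:R.
  have eta0 : 0 < eta by rewrite divr_gt0 // exprn_gt0.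
  have [K hK] := fin_uniform (fun s => pconv s eta eta0) A.
  pose k := maxn N K.
  have s1 : \sum_(s <- A) n2 (U k s - l s) <= d ^+ 2.
    apply: le_trans (_ : \sum_(s <- A) eta <= _).
      by rewrite big_seq_cond [X in _ <= X]big_seq_cond; apply: ler_sum => s /andP[sA _];
        apply: ltW; apply: hK => //; apply: leq_maxr.
    have -> : \sum_(s <- A) eta = eta *+ size A.
      by elim: (A) => [|a A' IH]; rewrite ?big_nil ?big_cons ?IH ?mulrS.
    have e1 : d ^+ 2 = eta * (size A)%:R + eta.
      by rewrite /eta -[X in _ = _ + X]mulr1 -mulrDr natr1 divfK // pnatr_eq0.
    rewrite -mulr_natr e1; have := ltW eta0; lra.
  have s2 : \sum_(s <- A) n2 (U m s - U k s) <= d ^+ 2.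
    apply: le_trans (_ : nsum (fun s => n2 ((U m - U k) s)) <= _).
      by apply: (@nsum_ub _ _ (fun s => n2 ((U m - U k) s)) A (l2P (U m - U k)) uA).
    rewrite -hnorm2; apply: ltW; apply: lt_sqr_lt; first exact: hnorm_ge0.
    by apply: hN => //; apply: leq_maxl.
  apply: le_trans (_ : \sum_(s <- A) (2 * n2 (U m s - U k s) + 2 * n2 (U k s - l s)) <= _).
    apply: ler_sum => s _; have := n2D (U m s - U k s) (U k s - l s).
    by rewrite addrA subrK.
  by rewrite big_split /= -!mulr_sumr; lra.
have lP : l2p l.
  have [N hN] := key 1 ltr01.
  have [B hB] := l2P (U N).
  exists (2 * B + 2 * (4 * 1 ^+ 2)) => A uA.
  apply: le_trans (_ : \sum_(s <- A) (2 * n2 (U N s) + 2 * n2 (- (U N s - l s))) <= _).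
    apply: ler_sum => s _; have := n2D (U N s) (- (U N s - l s)).
    by rewrite opprB addrC subrK.
  rewrite big_split /= -!mulr_sumr.
  have := hB A uA; have := hN N (leqnn _) A uA.
  have e2 : \sum_(s <- A) n2 (- (U N s - l s)) = \sum_(s <- A) n2 (U N s - l s).
    by apply: eq_bigr => s _; rewrite n2N.
  rewrite e2.
  lra.
exists (L2 lP) => e e0.
have e3 : 0 < e / 3 by rewrite divr_gt0.
have [N hN] := key _ e3; exists N => m hm.
apply: sqr_lt_lt => //; first exact: hnorm_ge0.
rewrite hnorm2; apply: le_lt_trans (_ : 4 * (e / 3) ^+ 2 < _).
  apply: nsum_le => A uA; exact: hN.
rewrite !expr2; nra.
Qed.

End Complete.


Section CabsLemmas.
Variable R : realType.
Local Notation C := (R[i]).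

Lemma cabs2 (z : C) : cabs z ^+ 2 = n2 z.
Proof. by rewrite /cabs cnorm2. Qed.

Lemma cabs_ge0 (z : C) : 0 <= cabs z.
Proof. by case: z => a b; rewrite /cabs /= sqrtr_ge0. Qed.

Lemma cabs_real (r : R) : cabs (r%:C)%C = `|r|.
Proof. by rewrite /cabs /= expr0n /= addr0 sqrtr_sqr. Qed.

Lemma cabsM (z w : C) : cabs (z * w) = cabs z * cabs w.
Proof. exact: Normc.normcM. Qed.

Lemma cabsJ (z : C) : cabs (z^*)%C = cabs z.
Proof. by case: z => a b; rewrite /cabs /= sqrrN. Qed.

Lemma cRe_le_cabs (z : C) : cRe z <= cabs z.
Proof.
apply: le_trans (ler_norm _) _; apply: sqr_le_le; rewrite ?normr_ge0 ?cabs_ge0 //.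
by rewrite real_normK ?num_real // cabs2 /n2 lerDl sqr_ge0.
Qed.

End CabsLemmas.

Section Cplx.
Variable R : realType.
Local Notation C := (R[i]).
Variable V : lmodType C.
Variable star : V -> V.
Hypothesis hstar : antilinear_involution star.
Variable n : nat.
Local Notation M := 'M[V]_n.
Variable p : M -> R.
Hypothesis pD : forall x y : M, p (x + y) <= p x + p y.
Hypothesis pZ : forall (a : C) (x : M), p (mxscale a x) = cabs a * p x.
Hypothesis pstar : forall x : M, p (mxstar star x) = p x.

Lemma starK v : star (star v) = v.
Proof. by case: hstar. Qed.

Lemma star_lin (a : C) v w : star (a *: v + w) = (a^*)%C *: star v + star w.
Proof. by case: hstar. Qed.

Lemma star0 : star 0 = 0.
Proof.
have := star_lin 1 0 0; rewrite scaler0 addr0 conjc1 scale1r => e.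
by apply: (addrI (star 0)); rewrite -e addr0.
Qed.

Lemma starD v w : star (v + w) = star v + star w.
Proof. by have := star_lin 1 v w; rewrite scale1r conjc1 scale1r. Qed.

Lemma starZ a v : star (a *: v) = (a^*)%C *: star v.
Proof. by have := star_lin a v 0; rewrite !addr0 star0 addr0. Qed.

Lemma mxscaleE a (x : M) i j : mxscale a x i j = a *: x i j.
Proof. by rewrite /mxscale mxE. Qed.

Lemma mxstarE (x : M) i j : mxstar star x i j = star (x j i).
Proof. by rewrite /mxstar mxE. Qed.

Lemma mxstarD (x y : M) : mxstar star (x + y) = mxstar star x + mxstar star y.
Proof. by apply/matrixP => i j; rewrite !mxE starD. Qed.

Lemma mxstarZ a (x : M) : mxstar star (mxscale a x) = mxscale (a^*)%C (mxstar star x).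
Proof. by apply/matrixP => i j; rewrite !mxE starZ. Qed.

Lemma mxstarK (x : M) : mxstar star (mxstar star x) = x.
Proof. by apply/matrixP => i j; rewrite !mxE starK. Qed.

Lemma mxscaleD a (x y : M) : mxscale a (x + y) = mxscale a x + mxscale a y.
Proof. by apply/matrixP => i j; rewrite !mxE scalerDr. Qed.

Lemma mxscaleA a b (x : M) : mxscale a (mxscale b x) = mxscale (a * b) x.
Proof. by apply/matrixP => i j; rewrite !mxE scalerA. Qed.

Lemma mxscale1 (x : M) : mxscale 1 x = x.
Proof. by apply/matrixP => i j; rewrite !mxE scale1r. Qed.

Lemma mxscaleDl a b (x : M) : mxscale (a + b) x = mxscale a x + mxscale b x.
Proof. by apply/matrixP => i j; rewrite !mxE scalerDl. Qed.

Lemma mxscaleN1 (x : M) : mxscale (-1) x = - x.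
Proof. by apply/matrixP => i j; rewrite !mxE scaleN1r. Qed.

Lemma p_ge0 x : 0 <= p x.
Proof.
have h1 := pD x (- x); rewrite addrN -mxscaleN1 pZ in h1.
have h0 : p 0 = 0.
  have e0 : mxscale 0 (0 : M) = 0 by apply/matrixP => i j; rewrite !mxE scale0r.
  by have := pZ 0 0; rewrite e0 /cabs Normc.normc0 mul0r.
have : cabs (-1 : C) = 1.
  rewrite (_ : (-1 : C) = ((-1 : R)%:C)%C); last by apply: ceq => /=; rewrite ?oppr0.
  by rewrite /cabs /= expr0n /= addr0 sqrrN expr1n sqrtr1.
by move=> e; rewrite e h0 mul1r in h1; lra.
Qed.

Definition rsc (r : R) (x : M) := mxscale (r%:C)%C x.

Lemma rC_mul (r s : R) : ((r * s)%:C = r%:C * s%:C :> C)%C.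
Proof. by apply: ceq => /=; ring. Qed.

Lemma rC_add (r s : R) : ((r + s)%:C = r%:C + s%:C :> C)%C.
Proof. by apply: ceq => /=; ring. Qed.

Lemma hb_exists h : exists g : M -> R,
  [/\ (forall x y, g (x + y) = g x + g y), (forall r x, g (rsc r x) = r * g x),
      (forall x, g x <= p x) & g h = p h].
Proof.
apply: (@hahn_banach R _ rsc).
- by move=> r x y; apply: mxscaleD.
- by move=> r s x; rewrite /rsc mxscaleA -rC_mul.
- by move=> x; rewrite /rsc (_ : (1%:C)%C = 1) ?mxscale1 //; apply: ceq.
- by move=> r s x; rewrite /rsc rC_add mxscaleDl.
- exact: pD.
- by move=> r x; rewrite /rsc pZ cabs_real.
Qed.

Lemma rsc_real r (x : M) : rsc r x = mxscale (r%:C)%C x. Proof. by []. Qed.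

Lemma functional h : exists F : M -> C,
  [/\ (forall (a : C) (x y : M), F (mxscale a x + y) = a * F x + F y),
      (forall x, F (mxstar star x) = (F x)^*%C),
      (forall x, cabs (F x) <= p x) &
      (mxstar star h = h -> cRe (F h) = p h)].
Proof.
have [g [gD gZ gp gh]] := hb_exists h.
pose g' x := (g x + g (mxstar star x)) / 2.
have g'D : forall x y, g' (x + y) = g' x + g' y.
  by move=> x y; rewrite /g' mxstarD !gD; lra.
have g'Z : forall r x, g' (rsc r x) = r * g' x.
  move=> r x; rewrite /g' /rsc mxstarZ conjc_real.
  by rewrite -!/(rsc _ _) !gZ; lra.
have g'J : forall x, g' (mxstar star x) = g' x.
  by move=> x; rewrite /g' mxstarK; lra.
have g'p : forall x, g' x <= p x.
  by move=> x; have := gp x; have := gp (mxstar star x); rewrite pstar /g'; lra.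
have g'N : forall x, g' (- x) = - g' x.
  move=> x; have := g'Z (-1) x; rewrite /rsc (_ : ((-1)%:C)%C = -1 :> C); last first.
    by apply: ceq => /=; rewrite ?oppr0.
  by rewrite mxscaleN1 => ->; lra.
have g'h : mxstar star h = h -> g' h = p h by move=> hh; rewrite /g' hh gh; lra.
clearbody g'.
pose F x := (g' x +i* (- g' (mxscale 'i%C x)))%C.
have Flin : forall (a : C) (x y : M), F (mxscale a x + y) = a * F x + F y.
  move=> [al be] x y.
  have ea : mxscale (al +i* be)%C x = rsc al x + rsc be (mxscale 'i%C x).
    rewrite /rsc mxscaleA -mxscaleDl; congr mxscale; apply: ceq => /=; ring.
  have eia : mxscale 'i%C (mxscale (al +i* be)%C x + y) =
      rsc (- be) x + rsc al (mxscale 'i%C x) + mxscale 'i%C y.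
    rewrite mxscaleD mxscaleA /rsc mxscaleA -mxscaleDl; congr (_ + _); congr mxscale.
    by apply: ceq => /=; ring.
  apply: ceq; rewrite /F /=.
    by rewrite ea !g'D !g'Z; ring.
  by rewrite eia !g'D !g'Z; ring.
have F0 : F 0 = 0.
  have := Flin 1 0 0; rewrite (_ : mxscale 1 (0 : M) + 0 = 0) ?mul1r; last first.
    by rewrite mxscale1 addr0.
  by move=> e; apply: (addrI (F 0)); rewrite -e addr0.
have Fsc : forall (a : C) x, F (mxscale a x) = a * F x.
  by move=> a x; have := Flin a x 0; rewrite addr0 F0 addr0.
exists F; split => //.
- move=> x; apply: ceq; rewrite /F /=; first exact: g'J.
  have -> : mxscale 'i%C (mxstar star x) = mxstar star (- mxscale 'i%C x).
    rewrite -mxscaleN1 mxscaleA mxstarZ; congr mxscale.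
    by apply: ceq => /=; ring.
  by rewrite g'J g'N.
- move=> x; set w := F x.
  have key : g' (mxscale (w^*)%C x) = n2 w.
    have : cRe (F (mxscale (w^*)%C x)) = g' (mxscale (w^*)%C x) by [].
    rewrite Fsc => <-; rewrite /n2 -/w; case: (w) => a b /=; ring.
  have := g'p (mxscale (w^*)%C x); rewrite key pZ cabsJ -cabs2.
  have := cabs_ge0 w; have := p_ge0 x; rewrite expr2; nra.
Qed.

End Cplx.


Section Final.
Variable R : realType.
Variable S : eqType.
Local Notation C := (R[i]).
Local Notation H := (l2 R S).

Lemma l2ip0 (w : H) : l2ip 0 w = 0.
Proof.
have := l2ip_lin 1 0 0 w; rewrite scaler0 addr0 mul1r => e.
by apply: (addrI (l2ip 0 w)); rewrite -e addr0.
Qed.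

Lemma l2ip_scale (c : C) (u w : H) : l2ip (c *: u) w = c * l2ip u w.
Proof. by have := l2ip_lin c u 0 w; rewrite addr0 l2ip0 addr0. Qed.

Lemma l2_is_hilbert : is_hilbert (@l2ip R S).
Proof.
split.
- exact: l2ip_lin.
- exact: l2ip_sym.
- exact: l2ip_pos.
- exact: l2_complete.
Qed.

Lemma hnorm0 : hnorm (@l2ip R S) 0 = 0.
Proof. by rewrite /hnorm l2ip0 sqrtr0. Qed.

Lemma delta_sum (x : S) (A : seq S) : uniq A ->
  \sum_(s <- A) (if s == x then 1 else 0 : R) <= 1.
Proof.
elim: A => [|a A IH]; first by rewrite big_nil ler01.
rewrite cons_uniq => /andP[aA uA]; rewrite big_cons.
case: eqP => [ax|_]; last by rewrite add0r IH.
rewrite big1_seq ?addr0 // => s /andP[_ sA]; case: eqP => // sx.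
by move: aA; rewrite ax -sx sA.
Qed.

End Final.

Close Scope classical_set_scope.

Theorem mainTheorem7 (R : realType) (V : lmodType (R[i])) (star : V -> V)
    (ns : forall n : nat, 'M[V]_n -> R) :
  abstract_h_strong_super_operator_space star ns ->
  forall n : nat,
    exists (H : lmodType (R[i])) (ip : H -> H -> R[i]) (nu : 'M[V]_n -> H -> H),
      is_hilbert ip /\ [/\
          (* nu maps M_n(V) into B(H) *)
          (forall x : 'M[V]_n, bounded_op ip (nu x)),
          (* nu is linear *)
          (forall (a : R[i]) (x y : 'M[V]_n) (u : H),
              nu (mxscale a x + y) u = a *: nu x u + nu y u),
          (* nu(x^* ) = nu(x)^dagger, i.e. <nu(x) u, w> = <u, nu(x^* ) w> *)
          (forall (x : 'M[V]_n) (u w : H), ip (nu x u) w = ip u (nu (mxstar star x) w)),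
          (* strongly contractive *)
          (forall x : 'M[V]_n, numrad ip (nu x) <= ns n x) &
          (* hermitian isometric *)
          (forall x : 'M[V]_n, mxstar star x = x -> hopnorm ip (nu x) = ns n x)].
Proof.
move=> [hstar [hns [_ [_ [_ [hanti _]]]]]] n.
pose p := ns n.
have pD : forall x y, p (x + y) <= p x + p y by move=> x y; have [_ [_ h]] := hns n; exact: h.
have pZ : forall a x, p (mxscale a x) = cabs a * p x by move=> a x; have [_ [h _]] := hns n; exact: h.
have pstar : forall x, p (mxstar star x) = p x by move=> x; exact: hanti.
have pge0 := p_ge0 pD pZ.
have [Fs hFs] := choice (fun h => functional hstar pD pZ pstar h).
pose M := 'M[V]_n.
have Flin : forall s a x y, Fs s (mxscale a x + y) = a * Fs s x + Fs s y.
  by move=> s; have [h _ _ _] := hFs s.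
have Fstar : forall s x, Fs s (mxstar star x) = (Fs s x)^*%C.
  by move=> s; have [_ h _ _] := hFs s.
have Fbnd : forall s x, cabs (Fs s x) <= p x.
  by move=> s; have [_ _ h _] := hFs s.
have Fnorm : forall h, mxstar star h = h -> cRe (Fs h h) = p h.
  by move=> h; have [_ _ _ e] := hFs h.
have Fn2 : forall s x, n2 (Fs s x) <= p x ^+ 2.
  move=> s x; rewrite -cabs2; have := Fbnd s x; have := cabs_ge0 (Fs s x).
  by rewrite !expr2; nra.
have nuP : forall (x : M) (u : l2 R M), l2p (fun s => Fs s x * u s).
  move=> x u; apply: bnd_le (bndZ (sqr_ge0 (p x)) (l2P u)) => s.
  by rewrite n2M; apply: ler_wpM2r; [exact: n2_ge0 | exact: Fn2].
pose nu (x : M) (u : l2 R M) : l2 R M := L2 (nuP x u).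
have nuE : forall x u s, nu x u s = Fs s x * u s by [].
have nub : forall x u, hnorm (@l2ip R M) (nu x u) <= p x * hnorm (@l2ip R M) u.
  move=> x u; apply: sqr_le_le; rewrite ?hnorm_ge0 ?mulr_ge0 ?hnorm_ge0 //.
  rewrite exprMn !hnorm2 -nsumZ; first last.
  - exact: l2P.
  - by move=> s; exact: n2_ge0.
  - exact: sqr_ge0.
  apply: nsum_mono; last by apply: bndZ; [exact: sqr_ge0 | exact: l2P].
  move=> s; rewrite nuE n2M; apply: ler_wpM2r; [exact: n2_ge0 | exact: Fn2].
exists (l2 R M), (@l2ip R M), nu; split; first exact: l2_is_hilbert.
split.
- move=> x; split.
    by move=> a u v; apply: l2_ext => s /=; ring.
  by exists (p x) => u; apply: nub.
- by move=> a x y u; apply: l2_ext => s /=; rewrite Flin; ring.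
- move=> x u w; rewrite /l2ip.
  have e : forall s, nu x u s * (w s)^*%C = u s * (nu (mxstar star x) w s)^*%C.
    move=> s; rewrite !nuE Fstar.
    by move: (Fs s x) (u s) (w s) => [a b] [c d] [e f]; apply: ceq => /=; ring.
  by congr Complex; apply: rsum_ext => s; rewrite /reip /imip e.
- move=> x; rewrite /numrad; apply: ge_sup.
    exists (cabs (l2ip (nu x 0) 0)); exists 0 => //.
    by rewrite /unit_ball /= hnorm0 ler01.
  move=> _ [u ub <-]; set w := l2ip (nu x u) u.
  have hu : hnorm (@l2ip R M) u ^+ 2 <= 1.
    by move: ub; rewrite /unit_ball /= => ub1; have := hnorm_ge0 u; rewrite expr2; nra.
  have key : n2 w <= cabs w * p x * hnorm (@l2ip R M) u ^+ 2.
    have e1 : n2 w = cRe (l2ip ((w^*)%C *: nu x u) u).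
      by rewrite l2ip_scale /n2 -/w; case: (w) => a b /=; ring.
    rewrite e1 hnorm2 -nsumZ; first last.
    - exact: l2P.
    - by move=> s; exact: n2_ge0.
    - by rewrite mulr_ge0 ?cabs_ge0 ?pge0.
    rewrite -rsum_nn; first last.
    - by apply: bndZ; [rewrite mulr_ge0 ?cabs_ge0 ?pge0 | exact: l2P].
    - by move=> s; rewrite mulr_ge0 ?mulr_ge0 ?cabs_ge0 ?pge0 ?n2_ge0.
    apply: rsum_le; first exact: absb_reip.
      apply: absbZ; apply: absb_le (l2P u) => s; rewrite ger0_norm //; exact: n2_ge0.
    move=> s; rewrite /reip /=.
    have e2 : cRe ((w^*)%C * (Fs s x * u s) * (u s)^*%C) = cRe ((w^*)%C * Fs s x) * n2 (u s).
      by move: ((w^*)%C) (Fs s x) (u s) => [a b] [c d] [e f] /=; rewrite /n2 /=; ring.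
    rewrite e2; apply: ler_wpM2r; first exact: n2_ge0.
    apply: le_trans (cRe_le_cabs _) _; rewrite cabsM cabsJ.
    by apply: ler_wpM2l; [exact: cabs_ge0 | exact: Fbnd].
  rewrite -cabs2 in key.
  change (cabs w <= p x).
  have c0 := cabs_ge0 w; have p0 := pge0 x; have h0 := hnorm_ge0 u.
  set c := cabs w in key c0 *; set P := p x in key p0 *; set h := hnorm _ u in key hu h0.
  rewrite !expr2 in key hu.
  have cp := mulr_ge0 c0 p0.
  have k2 : c * c <= c * P by nra.
  nra.
- move=> x hx; rewrite /hopnorm.
  have ub : ubound [set hnorm (@l2ip R M) (nu x u) | u in unit_ball (@l2ip R M)] (p x).
    move=> _ [u ub <-]; apply: le_trans (nub x u) _.
    by rewrite -[leRHS]mulr1 ler_wpM2l ?pge0.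
  apply/eqP; rewrite eq_le; apply/andP; split.
    apply: ge_sup => //; exists (hnorm (@l2ip R M) (nu x 0)); exists 0 => //.
    by rewrite /unit_ball /= hnorm0 ler01.
  have dP : l2p (fun s : M => if s == x then 1 else 0 : R[i]).
    exists 1 => A uA; apply: le_trans _ (@delta_sum R _ x A uA).
    by apply: ler_sum => s _; case: eqP => _; rewrite /n2 /= ?expr1n ?expr0n /= ?addr0.
  pose d := L2 dP.
  have dball : unit_ball (@l2ip R M) d.
    rewrite /unit_ball /=; apply: sqr_le_le; rewrite ?hnorm_ge0 ?ler01 // hnorm2 expr1n.
    apply: nsum_le => A uA; apply: le_trans _ (@delta_sum R _ x A uA).
    by apply: ler_sum => s _; rewrite /d /=; case: eqP => _; rewrite /n2 /= ?expr1n ?expr0n /= ?addr0.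
  apply: le_trans (_ : hnorm (@l2ip R M) (nu x d) <= _); last first.
    apply: sup_upper_bound; last by exists d.
    split; [by exists (hnorm (@l2ip R M) (nu x d)); exists d | by exists (p x)].
  apply: sqr_le_le; rewrite ?pge0 ?hnorm_ge0 // hnorm2.
  apply: le_trans (_ : n2 (nu x d x) <= _); last first.
    by have := @nsum_ub _ _ (fun s => n2 (nu x d s)) [:: x] (l2P _) isT; rewrite big_seq1.
  rewrite nuE /d /= eqxx mulr1; change (p x ^+ 2 <= n2 (Fs x x)); rewrite -(Fnorm x hx) /n2 lerDl; exact: sqr_ge0.
Qed.
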